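(* Let $d$ be a compatible metric on the Cantor space $\mathbf{C}$ and let $h:\mathbf{C}\to\mathbf{C}$ be a homeomorphism which is an isometry such that the orbit $\mathrm{orb}(x,h)$ is nowhere dense in $\mathbf{C}$ for every $x\in\mathbf{C}$. Then there exist $\Phi=(\varphi^L,\varphi^U)$ such that $\mathbf{F}_\Phi$ is a Lelek fence and a homeomorphism $\hat h$ of $\mathbf{F}_\Phi$ which is an isometry such that $h$ is a factor of $\hat h$. Moreover, if $\{K_n\}$ is a sequence of closed, $h$-invariant, nowhere dense subsets of $\mathbf{C}$, then $\Phi$ can be chosen so that $\varphi^U(x)>0$ for all $x\in\bigcup_n K_n$.
   Context: For $\Phi=(\varphi^L,\varphi^U)$ with $\varphi^L,\varphi^U:\mathbf{C}\to[0,1]$, $\varphi^L$ lower semicontinuous, $\varphi^U$ upper semicontinuous, $\varphi^L\le\varphi^U$, the fence is $\mathbf{F}_\Phi=\{(x,t)\in\mathbf{C}\times[0,1]:\varphi^L(x)\le t\le\varphi^U(x)\}$ with the maximum metric of $\mathbf{C}\times[0,1]$. $\mathbf{F}_\Phi$ is a Lelek fence if $\varphi^L\equiv0$, $\varphi^U$ is positive on a dense subset of $\mathbf{C}$, and the graph $\{(x,\varphi^U(x)):x\in\mathbf{C}\}$ is dense in $\mathbf{F}_\Phi$. *)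

(* Defs.v *)
From HB Require Import structures.
From mathcomp Require Import all_boot all_order all_algebra.
From mathcomp Require Import all_classical all_reals all_analysis.
Set Implicit Arguments. Unset Strict Implicit. Unset Printing Implicit Defensive.
Import Order.TTheory GRing.Theory Num.Theory.
Local Open Scope classical_set_scope.
Local Open Scope ring_scope.

(* The Cantor space C is MathComp-Analysis' [cantor_space] (nat -> bool with
   the product topology). *)
Notation C := cantor_space.

Section Defs.
Variable R : realType.

Definition is_metric (T : Type) (d : T -> T -> R) : Prop :=
  (forall x y, 0 <= d x y) /\ (forall x y, d x y = 0 <-> x = y) /\
  (forall x y, d x y = d y x) /\ (forall x y z, d x z <= d x y + d y z).

Definition compatible_metric (d : C -> C -> R) : Prop :=
  is_metric d /\
  forall A : set C, open A <->
    (forall x, A x -> exists2 e : R, 0 < e & [set y | d x y < e] `<=` A).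

Definition homeo_of (h g : C -> C) : Prop :=
  continuous h /\ continuous g /\ cancel h g /\ cancel g h.

Definition isometry_of (d : C -> C -> R) (h : C -> C) : Prop :=
  forall x y, d (h x) (h y) = d x y.

(* orbit of x under the homeomorphism h (with inverse g): {h^n x : n in Z} *)
Definition orb (h g : C -> C) (x : C) : set C :=
  [set y | exists n : nat, y = iter n h x \/ y = iter n g x].

Definition nowhere_dense (A : set C) : Prop := (closure A)° = set0.

Definition lsc (f : C -> R) : Prop := forall a : R, open [set x | a < f x].
Definition usc (f : C -> R) : Prop := forall a : R, open [set x | f x < a].

Definition admissible (phiL phiU : C -> R) : Prop :=
  (forall x, 0 <= phiL x <= 1) /\ (forall x, 0 <= phiU x <= 1) /\
  lsc phiL /\ usc phiU /\ (forall x, phiL x <= phiU x).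

Definition fence (phiL phiU : C -> R) : set (C * R) :=
  [set p | phiL p.1 <= p.2 <= phiU p.1].

Definition maxd (d : C -> C -> R) (p q : C * R) : R :=
  Num.max (d p.1 q.1) `|p.2 - q.2|.

Definition lelek_fence (d : C -> C -> R) (phiL phiU : C -> R) : Prop :=
  (forall x, phiL x = 0) /\
  (exists D : set C, dense D /\ forall x, D x -> 0 < phiU x) /\
  (* the graph of phiU is dense in F_Phi (w.r.t. the maximum metric) *)
  (forall p, fence phiL phiU p -> forall e : R, 0 < e ->
     exists x : C, maxd d p (x, phiU x) < e).

Definition fence_isometric_homeo (d : C -> C -> R) (F : set (C * R))
    (hh gg : C * R -> C * R) : Prop :=
  (forall p, F p -> F (hh p)) /\ (forall p, F p -> F (gg p)) /\
  (forall p, F p -> gg (hh p) = p) /\ (forall p, F p -> hh (gg p) = p) /\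
  (forall p q, F p -> F q -> maxd d (hh p) (hh q) = maxd d p q) /\
  (forall p q, F p -> F q -> maxd d (gg p) (gg q) = maxd d p q).

Definition is_factor (d : C -> C -> R) (F : set (C * R))
    (hh : C * R -> C * R) (h : C -> C) : Prop :=
  exists pi : C * R -> C,
    (forall p, F p -> forall e : R, 0 < e -> exists2 r : R, 0 < r &
       forall q, F q -> maxd d p q < r -> d (pi p) (pi q) < e) /\
    (forall x : C, exists2 p, F p & pi p = x) /\
    (forall p, F p -> pi (hh p) = h (pi p)).

End Defs.

(* Main.v *)
Require Import Defs.
From HB Require Import structures.
From mathcomp Require Import all_boot all_order all_algebra.
From mathcomp Require Import all_classical all_reals all_analysis.
From mathcomp Require Import lra.
Import Order.TTheory GRing.Theory Num.Theory.
Local Open Scope classical_set_scope.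
Local Open Scope ring_scope.

Lemma cyl_nbhs (O : set C) (x : C) : open O -> O x ->
  exists N : nat, forall y : C, (forall i, (i < N)%N -> y i = x i) -> O y.
Proof.
move=> oO Ox; apply: contrapT => /forallNP H.
have H' : forall N, exists y : C, (forall i, (i < N)%N -> y i = x i) /\ ~ O y.
  move=> N; have := H N => /existsNP [y /not_implyP [Hy nOy]]; by exists y.
pose yy N := projT1 (cid (H' N)).
have yyP N : (forall i, (i < N)%N -> yy N i = x i) /\ ~ O (yy N).
  exact: projT2 (cid (H' N)).
have cv : yy @ \oo --> (x : C).
  apply/cvg_sup => N U [V] [[W] oW <-] WfN WU.
  apply: (filterS WU); rewrite nbhs_simpl; exists N.+1 => // i /= Ni.
  by rewrite (proj1 (yyP i)).
have : \forall N \near \oo, O (yy N).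
  by apply: cv; exact: open_nbhs_nbhs.
by case=> M _ /(_ M (leqnn M)); apply: (proj2 (yyP M)).
Qed.



Definition cyl (s : seq bool) : set C :=
  [set y : C | forall i, (i < size s)%N -> y i = nth false s i].

Lemma cyl_open_gen n (t : nat -> bool) :
  open [set y : C | forall i, (i < n)%N -> y i = t i].
Proof.
elim: n => [|n IH].
  have -> : [set y : C | forall i, (i < 0)%N -> y i = t i] = setT.
    by apply/seteqP; split.
  exact: openT.
have -> : [set y : C | forall i, (i < n.+1)%N -> y i = t i] =
   [set y : C | forall i, (i < n)%N -> y i = t i] `&` ((fun y : C => y n) @^-1` [set t n]).
  apply/seteqP; split => y /=.
    by move=> H; split; [move=> i iN; apply: H; exact: ltnW|apply: H].
  by move=> [H1 H2] i; rewrite ltnS leq_eqVlt => /orP [/eqP ->|/H1].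
apply: openI => //; apply: open_comp; last exact: discrete_open.
move=> y _; exact: (@proj_continuous nat (fun _ => bool) n).
Qed.

Lemma cyl_open s : open (cyl s).
Proof. exact: (cyl_open_gen (size s) (fun i => nth false s i)). Qed.

Lemma cyl_ne s : cyl s !=set0.
Proof. by exists (fun i => nth false s i). Qed.

Lemma cyl_mkseq (x y : C) N :
  cyl (mkseq x N) y <-> forall i, (i < N)%N -> y i = x i.
Proof.
rewrite /cyl /= size_mkseq; split => H i iN; by rewrite H // nth_mkseq.
Qed.

Section Construction.
Variable R : realType.
Variable d : C -> C -> R.
Variables h g : C -> C.
Hypothesis dcomp : compatible_metric d.
Hypothesis hg : homeo_of h g.
Hypothesis hiso : isometry_of d h.
Hypothesis orbnd : forall x, nowhere_dense (orb h g x).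
Variable K : nat -> set C.
Hypothesis Kinv : forall n, h @` K n = K n.
Hypothesis Knd : forall n, nowhere_dense (K n).

Lemma d0 x y : 0 <= d x y. Proof. by case: dcomp => -[]. Qed.
Lemma dxx x : d x x = 0. Proof. by case: dcomp => -[_ [H _]] _; apply/H. Qed.
Lemma dsym x y : d x y = d y x. Proof. by case: dcomp => -[_ [_ [H _]]]. Qed.
Lemma dtri x y z : d x z <= d x y + d y z. Proof. by case: dcomp => -[_ [_ [_ H]]]. Qed.

Lemma open_d (A : set C) :
  (forall x, A x -> exists2 e : R, 0 < e & [set y | d x y < e] `<=` A) -> open A.
Proof. by case: dcomp => _ H /H. Qed.

Lemma d_open (A : set C) x : open A -> A x ->
  exists2 e : R, 0 < e & [set y | d x y < e] `<=` A.
Proof. by case: dcomp => _ H /H; apply. Qed.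

Lemma ghK : cancel h g. Proof. by case: hg => _ [_ []]. Qed.
Lemma hgK : cancel g h. Proof. by case: hg => _ [_ []]. Qed.

Lemma giso : isometry_of d g.
Proof. by move=> x y; rewrite -hiso !hgK. Qed.

Lemma hK n z : K n z -> K n (h z).
Proof. by move=> Kz; rewrite -Kinv; exists z. Qed.
Lemma gK n z : K n z -> K n (g z).
Proof. by rewrite -{1}Kinv => -[w Kw <-]; rewrite ghK. Qed.

Lemma orb_self q : orb h g q q.
Proof. by exists 0%N; left. Qed.

Lemma orb_h q z : orb h g q z -> orb h g q (h z).
Proof.
case=> n [->|->]; first by exists n.+1; left.
case: n => [|n]; first by exists 1%N; left.
by exists n; right; rewrite iterS hgK.
Qed.

Lemma orb_g q z : orb h g q z -> orb h g q (g z).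
Proof.
case=> n [->|->]; last by exists n.+1; right.
case: n => [|n]; first by exists 1%N; right.
by exists n; left; rewrite iterS ghK.
Qed.

Lemma iter_hg n y : iter n h (iter n g y) = y.
Proof. elim: n => // n IH; by rewrite iterSr iterS hgK. Qed.
Lemma iter_gh n y : iter n g (iter n h y) = y.
Proof. elim: n => // n IH; by rewrite iterSr iterS ghK. Qed.
Lemma iso_h n a b : d (iter n h a) (iter n h b) = d a b.
Proof. elim: n => // n IH; by rewrite !iterS hiso. Qed.
Lemma iso_g n a b : d (iter n g a) (iter n g b) = d a b.
Proof. elim: n => // n IH; by rewrite !iterS giso. Qed.

Definition D (x q : C) : R := inf [set d x z | z in orb h g q].

Lemma D_ne x q : [set d x z | z in orb h g q] !=set0.
Proof. by exists (d x q); exists q => //; exact: orb_self. Qed.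

Lemma D_lb x q : has_lbound [set d x z | z in orb h g q].
Proof. by exists 0 => _ [z _ <-]; exact: d0. Qed.

Lemma D_le x q z : orb h g q z -> D x q <= d x z.
Proof. by move=> oz; apply: (ge_inf (D_lb x q)); exists z. Qed.

Lemma D_glb x q b : (forall z, orb h g q z -> b <= d x z) -> b <= D x q.
Proof. by move=> H; apply: lb_le_inf; [exact: D_ne|move=> _ [z oz <-]; exact: H]. Qed.

Lemma D_ge0 x q : 0 <= D x q.
Proof. by apply: D_glb => z _; exact: d0. Qed.

Lemma D_self q : D q q = 0.
Proof. by apply/eqP; rewrite eq_le D_ge0 andbT -(dxx q); apply: D_le; exact: orb_self. Qed.

Lemma D_lip x y q : D x q - d x y <= D y q.
Proof.
apply: D_glb => z oz; have := @D_le x q z oz; have := dtri x y z; lra.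
Qed.

Lemma D_h x q : D (h x) q = D x q.
Proof.
apply/eqP; rewrite eq_le; apply/andP; split.
  apply: D_glb => z oz; rewrite -hiso; apply: D_le; exact: orb_h.
apply: D_glb => z oz; rewrite -[z]hgK hiso; apply: D_le; exact: orb_g.
Qed.

Lemma D_inv_lb (A : set C) y q (e : R) :
  (forall z, A z -> A (h z) /\ A (g z)) -> A y ->
  (forall w, A w -> e <= d w q) -> e <= D y q.
Proof.
move=> Ainv Ay He; apply: D_glb => z [n [->|->]].
- rewrite -[y](iter_hg n) iso_h; apply: He.
  elim: n => //= n IH; exact: (Ainv _ IH).2.
- rewrite -[y](iter_gh n) iso_g; apply: He.
  elim: n => //= n IH; exact: (Ainv _ IH).1.
Qed.


Lemma nd_avoid (U A : set C) : open U -> U !=set0 -> nowhere_dense A ->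
  exists z, U z /\ ~ closure A z.
Proof.
move=> oU [u Uu] ndA; apply: contrapT => /forallNP H.
have sub : U `<=` closure A.
  by move=> z Uz; have := H z => /not_andP [//|/contrapT].
by move: sub; rewrite open_subsetE // ndA => /(_ u Uu).
Qed.

Lemma nd_union (A B : set C) : nowhere_dense A -> nowhere_dense B ->
  nowhere_dense (A `|` B).
Proof.
move=> ndA ndB; rewrite /nowhere_dense closureU.
apply/seteqP; split => // x Ux.
have [z [Uz nAz]] := @nd_avoid _ A (@open_interior _ _) (ex_intro _ x Ux) ndA.
have oU' : open ((closure A `|` closure B)° `&` ~` closure A).
  by apply: openI; [exact: open_interior|apply: closed_openC; exact: closed_closure].
have [w [[Uw nAw] nBw]] := @nd_avoid _ B oU' (ex_intro _ z (conj Uz nAz)) ndB.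
by case: (interior_subset Uw).
Qed.

Lemma nd0 : nowhere_dense (@set0 C).
Proof. by rewrite /nowhere_dense closure0 interior0. Qed.

Lemma nd_fin (S : nat -> set C) k : (forall j, nowhere_dense (S j)) ->
  nowhere_dense [set z | exists2 j, (j < k)%N & S j z].
Proof.
move=> ndS; elim: k => [|k IH].
  have -> : [set z | exists2 j, (j < 0)%N & S j z] = set0.
    by apply/seteqP; split => // z [].
  exact: nd0.
have -> : [set z | exists2 j, (j < k.+1)%N & S j z] =
    [set z | exists2 j, (j < k)%N & S j z] `|` S k; last exact: nd_union.
apply/seteqP; split => z.
  case=> j; rewrite ltnS leq_eqVlt => /orP [/eqP -> Sz|jk Sz]; [by right|by left; exists j].
by case=> [[j jk Sz]|Sz]; [exists j => //; exact: ltnW|exists k].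
Qed.


Definition term (p : C * R * R) (y : C) : R := p.1.2 + p.2 * D y p.1.1.

Lemma term_ge p y : 0 <= p.2 -> p.1.2 <= term p y.
Proof. by move=> L0; rewrite /term lerDl mulr_ge0 // D_ge0. Qed.

Lemma term_h p y : term p (h y) = term p y.
Proof. by rewrite /term D_h. Qed.

Lemma term_lip p x y : 0 <= p.2 -> term p x - p.2 * d x y <= term p y.
Proof.
move=> L0; rewrite /term; have := D_lip x y p.1.1; nra.
Qed.

Lemma open_term_gt p c : 0 <= p.2 -> open [set y | c < term p y].
Proof.
move=> L0; apply: open_d => x /= cx.
exists ((term p x - c) / (p.2 + 1)); first by apply: divr_gt0; lra.
move=> y /= dxy; have := term_lip p x y L0.
rewrite ltr_pdivlMr in dxy; last lra.
have := d0 x y; nra.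
Qed.

Lemma open_term_lt p a : 0 <= p.2 -> open [set y | term p y < a].
Proof.
move=> L0; apply: open_d => x /= cx.
exists ((a - term p x) / (p.2 + 1)); first by apply: divr_gt0; lra.
move=> y /= dxy; have := term_lip p y x L0.
rewrite ltr_pdivlMr in dxy; last lra.
have := d0 x y; rewrite (dsym y x); nra.
Qed.

Definition x0 : C := fun _ => false.
Definition dflt : C * R * R := (x0, 1, 0).

Definition Fk (st : seq (C * R * R)) (y : C) : R :=
  foldr (fun p acc => Num.min (term p y) acc) 1 st.

Lemma Fk_le1 st y : Fk st y <= 1.
Proof. by elim: st => //= p st IH; rewrite ge_min IH orbT. Qed.

Lemma Fk_le_term st y j : (j < size st)%N -> Fk st y <= term (nth dflt st j) y.
Proof.
elim: st j => //= p st IH [|j] /=; first by rewrite ge_min lexx.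
by rewrite ltnS => /IH H; rewrite ge_min H orbT.
Qed.

Lemma Fk_glb st y b : b <= 1 ->
  (forall j, (j < size st)%N -> b <= term (nth dflt st j) y) -> b <= Fk st y.
Proof.
move=> b1; elim: st => //= p st IH H; rewrite le_min (H 0%N) //=.
by apply: IH => j js; apply: (H j.+1).
Qed.

Lemma Fk_open st c : (forall j, (j < size st)%N -> 0 <= (nth dflt st j).2) ->
  open [set y | c < Fk st y].
Proof.
elim: st => [|p st IH] H /=.
  by apply: open_d => x /= c1; exists 1 => //.
have -> : [set y | c < Num.min (term p y) (Fk st y)] =
    [set y | c < term p y] `&` [set y | c < Fk st y].
  by apply/seteqP; split => y /=; rewrite lt_min => /andP.
apply: openI; first by apply: open_term_gt; exact: (H 0%N).
by apply: IH => j js; apply: (H j.+1).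
Qed.

Lemma Fk_pos st y :
  (forall j, (j < size st)%N -> 0 < (nth dflt st j).1.2 /\ 0 <= (nth dflt st j).2) ->
  0 < Fk st y.
Proof.
elim: st => [|p st IH] H /=; first exact: ltr01.
rewrite lt_min IH ?andbT; last by move=> j js; apply: (H j.+1).
have [c0 L0] := H 0%N isT; have := term_ge p y L0; rewrite /= in c0 *; lra.
Qed.


Definition A (st : seq (C * R * R)) (k : nat) : set C :=
  [set z | exists2 j, (j < size st)%N & orb h g (nth dflt st j).1.1 z] `|`
  [set z | exists2 m, (m < k.+1)%N & K m z].

Lemma A_nd st k : nowhere_dense (A st k).
Proof.
apply: nd_union; first by apply: (nd_fin (fun j => orb h g (nth dflt st j).1.1)).
exact: nd_fin.
Qed.

Lemma A_inv st k z : A st k z -> A st k (h z) /\ A st k (g z).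
Proof.
case=> [[j js oz]|[m mk Kz]].
  by split; left; exists j => //; [exact: orb_h|exact: orb_g].
by split; right; exists m => //; [exact: hK|exact: gK].
Qed.


Definition target (k : nat) : seq bool * nat * nat :=
  odflt ([::], 0%N, 0%N) (unpickle k).
Definition tc (a n : nat) : R := a.+1%:R / n.+1%:R.

Lemma tc_gt0 a n : 0 < tc a n.
Proof. by rewrite /tc divr_gt0 // ltr0n. Qed.

Definition Bk st k := ~` closure (A st k).
Definition Wp st k (c : R) s := cyl s `&` [set y | c < Fk st y] `&` Bk st k.
Definition ts k := (target k).1.1.
Definition tcc k := tc (target k).1.2 (target k).2.

Definition qk k st : C :=
  if pselect (Wp st k (tcc k) (ts k) !=set0) then xget x0 (Wp st k (tcc k) (ts k))
  else xget x0 (cyl (ts k) `&` Bk st k).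
Definition ck k st : R :=
  if pselect (tcc k < Fk st (qk k st)) then tcc k else Fk st (qk k st) / 2.
Definition ek k st : R :=
  xget 1 [set e : R | 0 < e /\ [set y | d (qk k st) y < e] `<=` Bk st k].
Definition step k st : C * R * R := (qk k st, ck k st, (ek k st)^-1).

Lemma Bk_open st k : open (Bk st k).
Proof. by apply: closed_openC; exact: closed_closure. Qed.

Lemma qk_in k st : cyl (ts k) (qk k st) /\ Bk st k (qk k st).
Proof.
rewrite /qk; destruct (pselect (Wp st k (tcc k) (ts k) !=set0)) as [ne|nne].
  by have [[? ?] ?] := xgetPex x0 ne.
have ne : exists z, (cyl (ts k) `&` Bk st k) z.
  have [z [cz nz]] := @nd_avoid _ _ (cyl_open (ts k)) (cyl_ne _) (A_nd st k).
  by exists z.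
by have [] := xgetPex x0 ne.
Qed.

Lemma qk_good k st :
  (forall j, (j < size st)%N -> 0 <= (nth dflt st j).2) ->
  (exists y, cyl (ts k) y /\ tcc k < Fk st y) ->
  tcc k < Fk st (qk k st) /\ ck k st = tcc k.
Proof.
move=> L0 [y [cy Fy]].
have ne : Wp st k (tcc k) (ts k) !=set0.
  have oV : open (cyl (ts k) `&` [set y | tcc k < Fk st y]).
    by apply: openI; [exact: cyl_open|exact: Fk_open].
  have [z [[cz Fz] nz]] := @nd_avoid _ _ oV (ex_intro _ y (conj cy Fy)) (A_nd st k).
  by exists z.
have H : tcc k < Fk st (qk k st).
  rewrite /qk; destruct (pselect (Wp st k (tcc k) (ts k) !=set0)) as [ne'|] => //.
  by have [[_ ?] _] := xgetPex x0 ne'.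
by split => //; rewrite /ck; destruct (pselect (tcc k < Fk st (qk k st))).
Qed.

Lemma ek_props k st : 0 < ek k st /\
  forall w, A st k w -> ek k st <= d w (qk k st).
Proof.
have ex : exists e : R, 0 < e /\ [set y | d (qk k st) y < e] `<=` Bk st k.
  have [e e0 He] := @d_open _ _ (Bk_open st k) (qk_in k st).2.
  by exists e.
have [e0 He] := xgetPex 1 ex; split => // w Aw.
rewrite dsym leNgt; apply/negP => /He; apply.
exact: subset_closure.
Qed.

Fixpoint hist (k : nat) : seq (C * R * R) :=
  if k is k'.+1 then rcons (hist k') (step k' (hist k')) else [::].
Definition pp k := step k (hist k).

Lemma size_hist k : size (hist k) = k.
Proof. by elim: k => //= k IH; rewrite size_rcons IH. Qed.

Lemma nth_hist k j : (j < k)%N -> nth dflt (hist k) j = pp j.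
Proof.
elim: k => // k IH; rewrite ltnS leq_eqVlt => /orP [/eqP ->|jk] /=.
  by rewrite nth_rcons size_hist ltnn eqxx.
by rewrite nth_rcons size_hist jk IH.
Qed.

Lemma L_pos k : 0 < (pp k).2.
Proof. by rewrite /= invr_gt0; case: (ek_props k (hist k)). Qed.

Lemma Fk_hist_pos_gen k y :
  (forall j, (j < k)%N -> 0 < (pp j).1.2) -> 0 < Fk (hist k) y.
Proof.
move=> H; apply: Fk_pos => j; rewrite size_hist => jk.
by rewrite nth_hist // H // ltW // L_pos.
Qed.

Lemma c_pos k : 0 < (pp k).1.2.
Proof.
elim/ltn_ind: k => k IH /=; rewrite /ck.
destruct (pselect (tcc k < Fk (hist k) (qk k (hist k)))) as [H|H]; simpl.
  exact: tc_gt0.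
by apply: divr_gt0 => //; apply: Fk_hist_pos_gen.
Qed.

Lemma Fk_hist_pos k y : 0 < Fk (hist k) y.
Proof. by apply: Fk_hist_pos_gen => j _; exact: c_pos. Qed.

Lemma ck_le k : (pp k).1.2 <= Fk (hist k) (pp k).1.1.
Proof.
rewrite /= /ck; destruct (pselect (tcc k < Fk (hist k) (qk k (hist k)))) as [H|H]; simpl.
  exact: ltW.
by have := Fk_hist_pos k (qk k (hist k)); simpl; lra.
Qed.

Lemma ck_le1 k : (pp k).1.2 <= 1.
Proof. exact: le_trans (ck_le k) (Fk_le1 _ _). Qed.

Lemma sep k y : A (hist k) k y -> 1 <= term (pp k) y.
Proof.
move=> Ay; have [e0 He] := ek_props k (hist k).
have := @D_inv_lb _ _ _ _ (@A_inv (hist k) k) Ay He.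
rewrite /term /=; set e := ek k (hist k); set D0 := D _ _ => eD.
have := c_pos k; rewrite /= => c0.
have : e^-1 * e <= e^-1 * D0 by apply: ler_wpM2l => //; rewrite invr_ge0 ltW.
rewrite mulVf ?gt_eqF //; lra.
Qed.

Definition Sf x := [set r : R | r = 1 \/ exists j, r = term (pp j) x].
Definition f x := inf (Sf x).

Lemma term_pp_ge j x : (pp j).1.2 <= term (pp j) x.
Proof. by apply: term_ge; apply: ltW; exact: L_pos. Qed.

Lemma Sf_ne x : Sf x !=set0. Proof. by exists 1; left. Qed.
Lemma Sf_lb x : has_lbound (Sf x).
Proof.
exists 0 => r [->|[j ->]] //.
by apply: le_trans (term_pp_ge j x); apply: ltW; exact: c_pos.
Qed.

Lemma f_le1 x : f x <= 1.
Proof. by apply: (ge_inf (Sf_lb x)); left. Qed.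
Lemma f_le_term x j : f x <= term (pp j) x.
Proof. by apply: (ge_inf (Sf_lb x)); right; exists j. Qed.
Lemma f_glb x b : b <= 1 -> (forall j, b <= term (pp j) x) -> b <= f x.
Proof. by move=> b1 H; apply: lb_le_inf; [exact: Sf_ne|move=> r [->|[j ->]]]. Qed.
Lemma f_ge0 x : 0 <= f x.
Proof.
apply: f_glb => // j; apply: le_trans (term_pp_ge j x); apply: ltW; exact: c_pos.
Qed.
Lemma f_lt x a : f x < a -> 1 < a \/ exists j, term (pp j) x < a.
Proof.
move=> /(inf_lt (Sf_ne x)) [r [->|[j ->]] ra]; [by left|by right; exists j].
Qed.

Lemma f_h x : f (h x) = f x.
Proof.
rewrite /f /Sf; congr inf; apply/seteqP; split => r /=;
  by case=> [->|[j ->]]; [left|right; exists j; rewrite term_h].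
Qed.

Lemma f_g x : f (g x) = f x.
Proof. by rewrite -{2}[x]hgK f_h. Qed.

Lemma Fk_ge_f k x : f x <= Fk (hist k) x.
Proof.
apply: Fk_glb; first exact: f_le1.
by move=> j; rewrite size_hist => jk; rewrite nth_hist //; exact: f_le_term.
Qed.

Lemma f_q k : f (pp k).1.1 = (pp k).1.2.
Proof.
apply/eqP; rewrite eq_le; apply/andP; split.
  by have := f_le_term (pp k).1.1 k; rewrite /term D_self mulr0 addr0.
apply: f_glb; first exact: ck_le1.
move=> j; have [jk|kj|->] := ltngtP j k.
- apply: le_trans (ck_le k) _.
  by rewrite -(@nth_hist k j jk); apply: Fk_le_term; rewrite size_hist.
- apply: le_trans (ck_le1 k) _; apply: sep; left; exists k.
    by rewrite size_hist.
  by rewrite nth_hist //; exact: orb_self.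
- exact: term_pp_ge.
Qed.

Lemma f_K m y : K m y -> 0 < f y.
Proof.
move=> Ky; apply: lt_le_trans (Fk_hist_pos m y) _.
apply: f_glb; first exact: Fk_le1.
move=> j; have [jm|mj] := ltnP j m.
  by rewrite -(@nth_hist m j jm); apply: Fk_le_term; rewrite size_hist.
apply: le_trans (Fk_le1 _ _) _; apply: sep; right; exists m => //.
Qed.

Lemma f_usc a : open [set x | f x < a].
Proof.
apply: open_d => x /= /f_lt [a1|[j tj]].
  by exists 1 => // y _ /=; apply: le_lt_trans (f_le1 y) a1.
have oT := @open_term_lt (pp j) a (ltW (L_pos j)).
have [e e0 He] := @d_open _ _ oT tj.
by exists e => // y /He /=; apply: le_lt_trans (f_le_term y j).
Qed.

Lemma ball_open x (e : R) : open [set y | d x y < e].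
Proof.
apply: open_d => y /= xy; exists (e - d x y); first by rewrite subr_gt0.
move=> z /= yz; have := dtri x y z; lra.
Qed.

Lemma target_pickle t : target (pickle t) = t.
Proof. by rewrite /target pickleK. Qed.

Lemma approx (t e : R) : 0 <= t -> 0 < e ->
  exists a n : nat, t < tc a n /\ tc a n < t + e.
Proof.
move=> t0 e0.
have [n Hn] : exists n : nat, e^-1 < n.+1%:R by exists (Num.Def.trunc e^-1); exact: truncnS_gt.
have n0 : (0 : R) < n.+1%:R by rewrite ltr0n.
have [a /andP [Ha1 Ha2]] : exists a : nat, (a%:R <= t * n.+1%:R < a.+1%:R).
  by exists (Num.Def.trunc (t * n.+1%:R)); apply: trunc_itv; apply: mulr_ge0 => //; exact: ltW.
exists a, n; rewrite /tc; split.
  by rewrite ltr_pdivlMr.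
rewrite ltr_pdivrMr // mulrDl.
have : 1 < e * n.+1%:R.
  by rewrite -ltr_pdivrMl // mulr1.
rewrite -natr1 in Ha2 *; lra.
Qed.


Lemma graph_dense x t e : 0 <= t <= f x -> 0 < e ->
  exists y, maxd d (x, t) (y, f y) < e.
Proof.
move=> /andP [t0 tf] e0.
have [small|big] := ltP (f x - t) e.
  exists x; rewrite /maxd /= gt_max dxx e0 /= ler0_norm ?subr_le0 //; lra.
have xin : [set y | d x y < e] x by rewrite /= dxx.
have [N HN] := @cyl_nbhs _ _ (ball_open x e) xin.
have [a [n [ta ate]]] := @approx t e t0 e0.
set k := pickle (mkseq x N, a, n).
have tsk : ts k = mkseq x N by rewrite /ts /k target_pickle.
have tck : tcc k = tc a n by rewrite /tcc /k target_pickle.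
have [Hlt Hck] : tcc k < Fk (hist k) (qk k (hist k)) /\ ck k (hist k) = tcc k.
  apply: qk_good.
    by move=> j; rewrite size_hist => jk; rewrite nth_hist //; apply: ltW; exact: L_pos.
  exists x; split; first by rewrite tsk; apply/cyl_mkseq.
  rewrite tck; apply: lt_le_trans (Fk_ge_f k x); lra.
exists (pp k).1.1; rewrite f_q /maxd /= gt_max; apply/andP; split.
  apply: HN; apply/cyl_mkseq; rewrite -tsk; exact: (qk_in k (hist k)).1.
by rewrite Hck tck ltr0_norm ?subr_lt0 //; lra.
Qed.

Lemma pos_dense : dense [set y | 0 < f y].
Proof.
move=> O [x Ox] oO.
have [N HN] := @cyl_nbhs _ _ oO Ox.
set k := pickle (mkseq x N, 0%N, 0%N).
have tsk : ts k = mkseq x N by rewrite /ts /k target_pickle.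
exists (pp k).1.1; split; last by rewrite /= f_q; exact: c_pos.
apply: HN; apply/cyl_mkseq; rewrite -tsk; exact: (qk_in k (hist k)).1.
Qed.

Lemma main_constr : exists (phiL phiU : C -> R) (hh gg : C * R -> C * R),
  admissible phiL phiU /\ lelek_fence d phiL phiU /\
  fence_isometric_homeo d (fence phiL phiU) hh gg /\
  is_factor d (fence phiL phiU) hh h /\
  (forall x, (\bigcup_n K n) x -> 0 < phiU x).
Proof.
exists (fun _ => 0), f, (fun p => (h p.1, p.2)), (fun p => (g p.1, p.2)).
split.
  rewrite /admissible; split; first by move=> x /=; rewrite lexx ler01.
  split; first by move=> x; rewrite f_ge0 f_le1.
  split.
    move=> a; apply: open_d => x /= a0; exists 1 => //.
  split; first exact: f_usc.
  by move=> x; exact: f_ge0.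
split.
  split => //; split; first by exists [set y | 0 < f y]; split => //; exact: pos_dense.
  by move=> [x t] /= Ht e e0; apply: graph_dense.
split.
  rewrite /fence /=; split; first by move=> [x t] /=; rewrite f_h.
  split; first by move=> [x t] /=; rewrite f_g.
  split; first by move=> [x t] /= _; rewrite ghK.
  split; first by move=> [x t] /= _; rewrite hgK.
  split; first by move=> [x t] [y s] _ _; rewrite /maxd /= hiso.
  by move=> [x t] [y s] _ _; rewrite /maxd /= giso.
split.
  exists fst; split.
    move=> p _ e e0; exists e => // q _; apply: le_lt_trans.
    by rewrite /maxd le_max lexx.
  split; first by move=> x; exists (x, 0) => //=; rewrite /fence /= lexx f_ge0.
  by [].
by move=> x [m _ Kx]; exact: f_K Kx.
Qed.

End Construction.

Theorem theorem6p5 (R : realType) (d : C -> C -> R) (h g : C -> C) :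
  compatible_metric d -> homeo_of h g -> isometry_of d h ->
  (forall x, nowhere_dense (orb h g x)) ->
  (exists (phiL phiU : C -> R) (hh gg : C * R -> C * R),
     admissible phiL phiU /\ lelek_fence d phiL phiU /\
     fence_isometric_homeo d (fence phiL phiU) hh gg /\
     is_factor d (fence phiL phiU) hh h) /\
  (forall K : nat -> set C,
     (forall n, closed (K n) /\ h @` K n = K n /\ nowhere_dense (K n)) ->
     exists (phiL phiU : C -> R) (hh gg : C * R -> C * R),
       admissible phiL phiU /\ lelek_fence d phiL phiU /\
       fence_isometric_homeo d (fence phiL phiU) hh gg /\
       is_factor d (fence phiL phiU) hh h /\
       (forall x, (\bigcup_n K n) x -> 0 < phiU x)).
Proof.
move=> dc hgh hi ond; split.
  have [phiL [phiU [hh [gg [H1 [H2 [H3 [H4 _]]]]]]]] :=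
    @main_constr R d h g dc hgh hi ond (fun _ => set0)
      (fun _ => image_set0 _) (fun _ => nd0).
  by exists phiL, phiU, hh, gg.
move=> K HK.
exact: (@main_constr R d h g dc hgh hi ond K (fun n => (HK n).2.1) (fun n => (HK n).2.2)).
Qed.
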